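(* Let $d\ge2$ and let $\mathcal{H}$ be a $d$-uniform simple hypergraph such that any two distinct edges $S,S'$ with $S\cap S'\neq\emptyset$ satisfy $|S\cap S'|=d-1$. Let $x$ be a simplicial vertex of $\mathcal{H}$ and $S$ an edge of $\mathcal{H}$ containing $x$. If $\mathcal{S}$ is an induced matching in $\mathcal{H}\setminus S$, then $\mathcal{S}$ is an induced matching in $\mathcal{H}$. In particular, if $\mathcal{S}$ is a self disjoint set in $\mathcal{H}\setminus S$, then $\mathcal{S}$ is a self disjoint set in $\mathcal{H}$.
   Context: A simple hypergraph $\mathcal{H}$ is a set $\mathcal{E}(\mathcal{H})$ of subsets (edges) of a finite vertex set, each of cardinality at least $2$, none contained in another; $d$-uniform means all edges have cardinality $d$. $\mathcal{H}\setminus S$ is the hypergraph with the same vertex set and edge set $\mathcal{E}(\mathcal{H})\setminus\{S\}$. For a vertex $x$, $N[x]=\{x\}\cup\{y:\{x,y\}\subseteq E\text{ for some edge }E\}$; $x$ is simplicial if every $d$-subset of $N[x]$ is an edge. A family $\mathcal{S}=\{S_1,\dots,S_i\}$ of distinct edges is an induced matching if the $S_\ell$ are pairwise disjoint and no edge outside $\mathcal{S}$ is contained in $\bigcup_\ell S_\ell$. $\mathcal{S}$ is a self disjoint set if (i) for all $k$, $S_k\nsubseteq\bigcup_{\ell\neq k}S_\ell$, and (ii) there is an induced matching $\mathcal{S}_0\subseteq\mathcal{S}$ such that for every $S_\ell\in\mathcal{S}\setminus\mathcal{S}_0$ there is $S'\in\mathcal{S}_0$ with $|S_\ell\setminus S'|=1$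 (all notions relative to the ambient hypergraph). *)

(* Defs.v *)
(* A hypergraph on a finite vertex type T is its edge set
   E : {set {set T}}. *)
From mathcomp Require Import all_boot.
Set Implicit Arguments. Unset Strict Implicit. Unset Printing Implicit Defensive.

Section Hyper.
Variable T : finType.
Implicit Types (E F Sf : {set {set T}}) (S : {set T}) (x : T).

Definition simple_hg E : Prop :=
  (forall S, S \in E -> 2 <= #|S|) /\
  (forall S S', S \in E -> S' \in E -> S != S' -> ~ (S \subset S')).

Definition uniform_hg (d : nat) E : Prop := forall S, S \in E -> #|S| = d.

Definition del_edge E S : {set {set T}} := E :\ S.

Definition closed_nbhd E x : {set T} :=
  x |: [set y | [exists S in E, [set x; y] \subset S]].

Definition simplicial (d : nat) E x : Prop :=
  forall A : {set T}, A \subset closed_nbhd E x -> #|A| = d -> A \in E.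

Definition union_of Sf : {set T} := \bigcup_(S in Sf) S.

Definition induced_matching E Sf : Prop :=
  Sf \subset E /\
  (forall S S', S \in Sf -> S' \in Sf -> S != S' -> [disjoint S & S']) /\
  (forall S, S \in E -> S \notin Sf -> ~ (S \subset union_of Sf)).

Definition self_disjoint E Sf : Prop :=
  Sf \subset E /\
  (forall S, S \in Sf -> ~ (S \subset \bigcup_(S' in Sf | S' != S) S')) /\
  (exists S0 : {set {set T}}, S0 \subset Sf /\ induced_matching E S0 /\
     forall S, S \in Sf :\: S0 -> exists2 S', S' \in S0 & #|S :\: S'| = 1).

End Hyper.

(* Main.v *)
Require Import Defs.
From mathcomp Require Import all_boot.

Theorem lemma3p3 (T : finType) (d : nat) (E : {set {set T}}) (x : T) (S : {set T}) :
  2 <= d ->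
  simple_hg E ->
  uniform_hg d E ->
  (forall S1 S2, S1 \in E -> S2 \in E -> S1 != S2 ->
     S1 :&: S2 != set0 -> #|S1 :&: S2| = d.-1) ->
  simplicial d E x ->
  S \in E -> x \in S ->
  (forall Sf : {set {set T}},
     induced_matching (del_edge E S) Sf -> induced_matching E Sf) /\
  (forall Sf : {set {set T}},
     self_disjoint (del_edge E S) Sf -> self_disjoint E Sf).
Proof.
move=> d2 simp unif _ simpl SE xS.
have P1 : forall Sf : {set {set T}},
     induced_matching (del_edge E S) Sf -> induced_matching E Sf.
  move=> Sf [sub [disj ind]].
  have subE : Sf \subset E.
    by apply: subset_trans sub _; rewrite /del_edge subD1set.
  split; [by [] | split; first by []].
  move=> S' S'E S'nSf.
  case: (eqVneq S' S) => [->|ne]; last first.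
    by apply: ind => //; rewrite /del_edge !inE ne S'E.
  move=> SU.
  have := subsetP SU x xS; case/bigcupP => S1 S1f xS1.
  have := subsetP sub S1 S1f; rewrite /del_edge !inE => /andP[S1nS S1E].
  have : ~~ (S \subset S1).
    apply/negP; apply: (simp.2 S S1) => //; by rewrite eq_sym.
  case/subsetPn => y yS yS1.
  have yx : y != x by apply/eqP => yx; rewrite yx xS1 in yS1.
  pose A := y |: (S1 :\ x).
  have cA : #|A| = d.
    have h := cardsD1 x S1; rewrite xS1 (unif _ S1E) in h.
    by rewrite /A cardsU1 in_setD1 (negbTE yS1) andbF /= h.
  have AN : A \subset closed_nbhd E x.
    apply/subsetP => z; rewrite !inE => /orP[/eqP->|/andP[_ zS1]];
      apply/orP; right;
      apply/existsP.
      exists S; rewrite SE /=; apply/subsetP => w; rewrite !inE.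
      by case/orP => /eqP->.
    exists S1; rewrite S1E /=; apply/subsetP => w; rewrite !inE.
    by case/orP => /eqP->.
  have AE : A \in E by apply: simpl.
  have AS : A != S.
    apply/eqP => AS; move: xS; rewrite -AS !inE eqxx /= orbF.
    by rewrite eq_sym (negbTE yx).
  have [w wS1 wx] : exists2 w, w \in S1 & w != x.
    have h := cardsD1 x S1; rewrite xS1 (unif _ S1E) in h.
    have : 0 < #|S1 :\ x| by move: d2; rewrite h; case: #|S1 :\ x|.
    case/card_gt0P => w; rewrite !inE => /andP[wx wS1]; by exists w.
  have AnSf : A \notin Sf.
    apply/negP => ASf.
    have AS1 : A != S1.
      have yA : y \in A by rewrite /A setU11.
      by apply/eqP => AS1; rewrite AS1 (negbTE yS1) in yA.
    have := disj A S1 ASf S1f AS1.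
    have wA : w \in A by rewrite /A !inE wx wS1 orbT.
    move/disjoint_setI0/setP/(_ w); by rewrite inE wA wS1 inE.
  apply: (ind A) => //.
    by rewrite /del_edge !inE AS AE.
  apply/subsetP => z; rewrite !inE => /orP[/eqP->|/andP[_ zS1]].
    exact: subsetP SU y yS.
  by apply/bigcupP; exists S1.
split; first exact: P1.
move=> Sf [sub [h1 [S0 [S0sub [S0im h2]]]]].
split; first by apply: subset_trans sub _; rewrite /del_edge subD1set.
split; first by [].
exists S0; split; first by [].
split; first exact: P1.
by [].
Qed.
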